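(* Let $\langle \mathscr{A} \mid \mathscr{R} \rangle$ be a $C(4)$ presentation. Suppose $w = XYZw'$, where $XYZ$ is a relation word with $X$, $Y$, $Z$ respectively its maximal piece prefix, middle word and maximal piece suffix, and $XY$ is a clean overlap prefix of $w$. Let $p$ be a piece. Then $\rho(pw') < \rho(w)$.
   Context: A monoid presentation $\langle \mathscr{A} \mid \mathscr{R} \rangle$ consists of an alphabet $\mathscr{A}$ and a set $\mathscr{R} \subseteq \mathscr{A}^* \times \mathscr{A}^*$ of relations. A relation word is a word occurring as one side of a relation. A piece is a word which occurs as a factor of two distinct relation words, or in two different (possibly overlapping) positions within one relation word; the empty word is always a piece. The presentation is $C(n)$ if no relation word can be written as a product of strictly fewer than $n$ pieces. For a relation word $R$ in a $C(3)$ (or stronger) presentation write $R = X_R Y_R Z_R$ where $X_R$ is the longest prefix of $R$ which is a piece (maximal piece prefix), $Z_R$ is the longest suffix which is a piece (maximal piece suffix), and $Y_R$ is the remaining middle word. A relation prefix of a word $u$ is a prefix of $u$ of the form $aX_RY_R$ for some word $a$ and relation word $R$. An overlap prefix of $u$ is a relation prefix admitting a factorisation $b X_1 Y_1' X_2 Y_2' \cdots X_n Y_n$ where: $n \geq 1$; this prefix has no factor of the form $X_0Y_0$ ($X_0,Y_0$ the maximal piece prefix and middle word of some relation word) beginning before the end of $b$; for each $i$, $R_i = X_iY_iZ_i$ is a relation word with $X_i$, $Y_i$, $Z_i$ its maximal piece prefix, middle word and maximal piece suffix; and for $1 \leq i < n$, $Y_i'$ is a proper non-empty prefix of $Y_i$.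 A relation prefix $aXY$ of $u$ is clean if $u$ does not have a prefix $aXY'X_1Y_1$ where $X_1, Y_1$ are the maximal piece prefix and middle word of some relation word and $Y'$ is a proper non-empty prefix of $Y$. The function $\rho : \mathscr{A}^* \to \mathbb{Z}$ is defined by $\rho(w) = -1$ if $w$ has no clean overlap prefix, and otherwise $\rho(w)$ is the length of the suffix of $w$ following the clean overlap prefix. *)

(* Defs.v *)
From mathcomp Require Import all_boot all_order all_algebra.
From Stdlib Require Import ClassicalEpsilon.
Set Implicit Arguments. Unset Strict Implicit. Unset Printing Implicit Defensive.

Section Presentations.
Variable A : eqType.
Variable R : seq A * seq A -> Prop.

Definition word := seq A.

Definition relword (u : word) : Prop := exists v, R (u, v) \/ R (v, u).

Definition occurs_at (p u : word) (i : nat) : Prop :=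
  exists x y, u = x ++ p ++ y /\ size x = i.

Definition piece (p : word) : Prop :=
  p = [::] \/
  exists u v i j, relword u /\ relword v /\ occurs_at p u i /\ occurs_at p v j
                  /\ (u <> v \/ i <> j).

Definition Cn (n : nat) : Prop :=
  forall (u : word) (ps : seq word), relword u ->
    (forall q, q \in ps -> piece q) -> u = flatten ps -> n <= size ps.

Definition is_prefix (p u : word) : Prop := exists s, u = p ++ s.
Definition is_suffix (p u : word) : Prop := exists s, u = s ++ p.

Definition max_piece_prefix (r X : word) : Prop :=
  is_prefix X r /\ piece X /\
  forall X', is_prefix X' r -> piece X' -> size X' <= size X.

Definition max_piece_suffix (r Z : word) : Prop :=
  is_suffix Z r /\ piece Z /\
  forall Z', is_suffix Z' r -> piece Z' -> size Z' <= size Z.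

Definition xyz (X Y Z : word) : Prop :=
  relword (X ++ Y ++ Z) /\ max_piece_prefix (X ++ Y ++ Z) X /\
  max_piece_suffix (X ++ Y ++ Z) Z.

(* words of the form X_1 Y_1' X_2 Y_2' ... X_n Y_n  (n >= 1) *)
Inductive ochain : word -> Prop :=
| och_last X Y Z : xyz X Y Z -> ochain (X ++ Y)
| och_cons X Y Z Y' t rest :
    xyz X Y Z -> Y' <> [::] -> t <> [::] -> Y = Y' ++ t ->
    ochain rest -> ochain (X ++ Y' ++ rest).

Definition overlap_prefix (u v : word) : Prop :=
  is_prefix v u /\
  exists b c, v = b ++ c /\ ochain c /\
    (forall X0 Y0 Z0, xyz X0 Y0 Z0 ->
       forall x y, v = x ++ (X0 ++ Y0) ++ y -> size b <= size x).

Definition clean (u a X Y : word) : Prop :=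
  ~ exists Y' t X1 Y1 Z1 s,
      Y = Y' ++ t /\ Y' <> [::] /\ t <> [::] /\ xyz X1 Y1 Z1 /\
      u = a ++ X ++ Y' ++ X1 ++ Y1 ++ s.

Definition clean_overlap_prefix (u v : word) : Prop :=
  overlap_prefix u v /\
  exists a X Y Z, xyz X Y Z /\ v = a ++ X ++ Y /\ clean u a X Y.

Definition pbool (P : Prop) : bool :=
  if excluded_middle_informative P then true else false.

Definition has_cop (w : word) : Prop :=
  exists k, clean_overlap_prefix w (take k w) /\ k <= size w.

(* rho w = -1 if w has no clean overlap prefix, otherwise the length of the
   suffix following the clean overlap prefix (the shortest one, should there
   be several) *)
Definition rho (w : word) : int :=
  match excluded_middle_informative (has_cop w) with
  | left H =>
      Posz (size w - @ex_minn (fun k => pbool (clean_overlap_prefix w (take k w)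
                                              /\ k <= size w))
                     (let: ex_intro k Hk := H in
                      ex_intro _ k (match excluded_middle_informative _ as e
                                     return (if e then true else false) = true
                                    with left _ => erefl | right n => False_ind _ (n Hk) end)))
  | right _ => (-1)%R
  end.

End Presentations.

(* Main.v *)
Require Import Defs.
From mathcomp Require Import all_boot all_order all_algebra.
From Stdlib Require Import ClassicalEpsilon.
From mathcomp Require Import zify.

Lemma pboolT (P : Prop) : pbool P -> P.
Proof. by rewrite /pbool; case: excluded_middle_informative. Qed.

Lemma pboolI (P : Prop) : P -> pbool P.
Proof. by rewrite /pbool; case: excluded_middle_informative. Qed.

Lemma piece_factor (A : eqType) (R : seq A * seq A -> Prop) (p c q d : seq A) :
  piece R p -> p = c ++ q ++ d -> piece R q.
Proof.
case=> [->|[u [v [i [j [Hu [Hv [[x1 [y1 [Eu Si]]] [[x2 [y2 [Ev Sj]]] Hd]]]]]]]]] Ep.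
  by left; case: q Ep => //; case: c => //.
right; exists u, v, (i + size c), (j + size c).
split; first exact: Hu. split; first exact: Hv.
split.
  exists (x1 ++ c), (d ++ y1); split; first by rewrite Eu Ep !catA.
  by rewrite size_cat Si.
split.
  exists (x2 ++ c), (d ++ y2); split; first by rewrite Ev Ep !catA.
  by rewrite size_cat Sj.
by case: Hd => [H|H]; [left|right; lia].
Qed.

Theorem lemma2 (A : eqType) (R : seq A * seq A -> Prop) (HC4 : Cn R 4)
    (w w' X Y Z p : seq A) :
  xyz R X Y Z ->
  w = X ++ Y ++ Z ++ w' ->
  overlap_prefix R w (X ++ Y) ->
  clean R w [::] X Y ->
  piece R p ->
  (rho R (p ++ w') < rho R w)%R.
Proof.
move=> Hxyz Ew Hov Hcl Hp.
have Hk : clean_overlap_prefix R w (take (size (X ++ Y)) w) /\ size (X ++ Y) <= size w.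
  have Et : take (size (X ++ Y)) w = X ++ Y by rewrite Ew catA take_size_cat.
  rewrite Et; split; last by rewrite Ew !size_cat; lia.
  by split => //; exists [::], X, Y, Z.
have Hlow : forall m, (forall n, pbool (clean_overlap_prefix R w (take n w) /\ n <= size w) -> m <= n) ->
   (size Z + size w' <= size w - m)%N.
  move=> m Hm; have := Hm _ (@pboolI _ Hk).
  rewrite Ew !size_cat => ?; lia.
rewrite /rho.
case: excluded_middle_informative => H1; last first.
  case: excluded_middle_informative => H2; last first.
    by exfalso; apply: H2; exists (size (X ++ Y)).
  by case: ex_minnP.
case: ex_minnP => m' /pboolT [[_ [a [X1 [Y1 [Z1 [Hx1 [Ea _]]]]]]] Hm'] _.
case: excluded_middle_informative => H2; last first.
  by exfalso; apply: H2; exists (size (X ++ Y)).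
case: ex_minnP => m _ Hmin.
have Hl := Hlow m Hmin.
have Hgt : size p < m'.
  rewrite ltnNge; apply/negP => Hle.
  have Ep : p = a ++ (X1 ++ Y1) ++ drop m' p.
    by rewrite catA -Ea takel_cat // cat_take_drop.
  have Hpc := @piece_factor _ R p a (X1 ++ Y1) (drop m' p) Hp Ep.
  case: Hx1 => Hr [_ [_ [HZ _]]].
  have Hall : forall q, q \in [:: X1 ++ Y1; Z1] -> piece R q.
    by move=> q; rewrite !inE => /orP [/eqP->|/eqP->].
  have := @HC4 _ [:: X1 ++ Y1; Z1] Hr Hall; rewrite /= cats0 catA => /(_ erefl) //.

rewrite ltz_nat size_cat; rewrite size_cat in Hm'.
move: Hl Hgt Hm'; clear; move: (size w - m) (size p) (size w') (size Z) m' => r P W Zs k.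
clear; lia.
Qed.
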